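(* Let $A=\langle Q,\delta,\gamma,F\rangle$ be a pomset automaton. If $q\xrightarrow{U}_A q'$, then there exist $\ell\in\mathbb N$, states $q_0,\dots,q_\ell\in Q$ with $q_0=q$ and $q_\ell=q'$, and pomsets $U_0,\dots,U_{\ell-1}$ with $U=U_0\cdots U_{\ell-1}$, such that for each $0\le i<\ell$ the trace $q_i\xrightarrow{U_i}_A q_{i+1}$ is a unit trace.
   Context: Fix a finite alphabet $\Sigma$; pomsets are isomorphism classes of $\Sigma$-labelled posets, $1$ the empty pomset, $a\in\Sigma$ the one-point pomset, $\cdot,\parallel$ sequential/parallel composition, $\mathsf{Pom}^{\mathsf{sp}}$ the smallest set containing $1$ and all $a$ closed under both; the empty product $U_0\cdots U_{-1}$ is $1$. A PA is $A=\langle Q,\delta,\gamma,F\rangle$ with $F\subseteq Q$, $\delta:Q\times\Sigma\to Q$, $\gamma:Q^3\to Q$, with states $\bot\notin F$, $\top\in F$ such that $\delta(\bot,a)=\delta(\top,a)=\bot$, $\gamma(\bot,r,s)=\gamma(\top,r,s)=\bot$. Traces: the smallest relation with $q\xrightarrow{1}_A q$; $q\xrightarrow{a}_A\delta(q,a)$; $q\xrightarrow{U}_A q''\xrightarrow{V}_A q'$ implies $q\xrightarrow{U\cdot V}_A q'$; $r\xrightarrow{U}_A r'\in F$, $s\xrightarrow{V}_A s'\in F$ imply $q\xrightarrow{U\parallel V}_A\gamma(q,r,s)$. A unit trace is either a $\delta$-trace $q\xrightarrow{a}_A\delta(q,a)$ for some $a\in\Sigma$, or a $\gamma$-trace $q\xrightarrow{V\parallel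 W}_A\gamma(q,r,s)$ where $r\xrightarrow{V}_A r'$ and $s\xrightarrow{W}_A s'$ for some $r',s'\in F$. *)

(* Defs.v *)
From mathcomp Require Import all_boot.
Set Implicit Arguments. Unset Strict Implicit. Unset Printing Implicit Defensive.


(* A finite Sigma-labelled (partially ordered) set: carrier, order, labels.
   Pomsets are taken up to isomorphism ([lp_iso]). *)
Record lposet (Sigma : finType) := LPoset {
  lp_car : finType;
  lp_le : rel lp_car;
  lp_lab : lp_car -> Sigma }.
Arguments LPoset {Sigma} lp_car lp_le lp_lab.
Arguments lp_car {Sigma} l.
Arguments lp_le {Sigma} l _ _.
Arguments lp_lab {Sigma} l _.

Section Pomsets.
Variable Sigma : finType.
Notation lposet := (lposet Sigma).

Definition lp_iso (U V : lposet) : Prop :=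
  exists f : lp_car U -> lp_car V,
    [/\ bijective f,
        (forall x, lp_lab V (f x) = lp_lab U x) &
        (forall x y, lp_le V (f x) (f y) = lp_le U x y)].

Definition pom_one : lposet :=
  LPoset void (fun _ _ => true) (fun v => of_void Sigma v).

Definition pom_sym (a : Sigma) : lposet :=
  LPoset unit (fun _ _ => true) (fun _ => a).

Definition sum_lab (U V : lposet) (x : (lp_car U + lp_car V)%type) : Sigma :=
  match x with inl u => lp_lab U u | inr v => lp_lab V v end.

Definition seq_le (U V : lposet) : rel (lp_car U + lp_car V)%type :=
  fun x y => match x, y with
  | inl u, inl u' => lp_le U u u'
  | inr v, inr v' => lp_le V v v'
  | inl _, inr _ => true
  | inr _, inl _ => false
  end.

Definition pom_seq (U V : lposet) : lposet :=
  LPoset (lp_car U + lp_car V)%type (@seq_le U V) (@sum_lab U V).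

Definition par_le (U V : lposet) : rel (lp_car U + lp_car V)%type :=
  fun x y => match x, y with
  | inl u, inl u' => lp_le U u u'
  | inr v, inr v' => lp_le V v v'
  | _, _ => false
  end.

Definition pom_par (U V : lposet) : lposet :=
  LPoset (lp_car U + lp_car V)%type (@par_le U V) (@sum_lab U V).

Definition pom_prod (s : seq lposet) : lposet := foldr pom_seq pom_one s.

End Pomsets.

Record PA (Sigma : finType) := MkPA {
  pa_Q : Type;
  pa_delta : pa_Q -> Sigma -> pa_Q;
  pa_gamma : pa_Q -> pa_Q -> pa_Q -> pa_Q;
  pa_F : pa_Q -> Prop;
  pa_bot : pa_Q;
  pa_top : pa_Q;
  pa_bot_nF : ~ pa_F pa_bot;
  pa_top_F : pa_F pa_top;
  pa_delta_bot : forall a, pa_delta pa_bot a = pa_bot;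
  pa_delta_top : forall a, pa_delta pa_top a = pa_bot;
  pa_gamma_bot : forall r s, pa_gamma pa_bot r s = pa_bot;
  pa_gamma_top : forall r s, pa_gamma pa_top r s = pa_bot }.

Arguments pa_Q {Sigma} p.
Arguments pa_delta {Sigma} p _ _.
Arguments pa_gamma {Sigma} p _ _ _.
Arguments pa_F {Sigma} p _.
Arguments pa_bot {Sigma} p.
Arguments pa_top {Sigma} p.

Section Traces.
Variables (Sigma : finType) (A : PA Sigma).

(* Trace relation q -U->_A q' on pomsets (closed under isomorphism,
   i.e. a relation on isomorphism classes). *)
Inductive trace : pa_Q A -> lposet Sigma -> pa_Q A -> Prop :=
| tr_one q : trace q (pom_one Sigma) q
| tr_sym q a : trace q (pom_sym a) (pa_delta A q a)
| tr_seq q q'' q' U V :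
    trace q U q'' -> trace q'' V q' -> trace q (pom_seq U V) q'
| tr_par q r r' s s' U V :
    trace r U r' -> pa_F A r' -> trace s V s' -> pa_F A s' ->
    trace q (pom_par U V) (pa_gamma A q r s)
| tr_iso q q' U V : lp_iso U V -> trace q U q' -> trace q V q'.

Definition unit_trace (q : pa_Q A) (U : lposet Sigma) (q' : pa_Q A) : Prop :=
  (exists a : Sigma, lp_iso U (pom_sym a) /\ q' = pa_delta A q a) \/
  (exists (r s r' s' : pa_Q A) (V W : lposet Sigma),
     [/\ trace r V r' /\ pa_F A r', trace s W s' /\ pa_F A s',
         lp_iso U (pom_par V W) & q' = pa_gamma A q r s]).

End Traces.

(* Main.v *)
Require Import Defs.
From mathcomp Require Import all_boot.
Set Implicit Arguments. Unset Strict Implicit.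

Section Isos.
Variable Sigma : finType.
Implicit Types U V W : lposet Sigma.

Lemma iso_mk U V (f : lp_car U -> lp_car V) (g : lp_car V -> lp_car U) :
  cancel f g -> cancel g f ->
  (forall x, lp_lab V (f x) = lp_lab U x) ->
  (forall x y, lp_le V (f x) (f y) = lp_le U x y) -> lp_iso U V.
Proof. move=> fg gf hl hle; exists f; split => //; by exists g. Qed.

Lemma iso_refl U : lp_iso U U.
Proof. by apply: (@iso_mk _ _ id id). Qed.

Lemma iso_sym U V : lp_iso U V -> lp_iso V U.
Proof.
case=> f [[g fg gf] hl hle].
apply: (@iso_mk _ _ g f) => // [x|x y]; first by rewrite -hl gf.
by rewrite -hle !gf.
Qed.

Lemma iso_trans U V W : lp_iso U V -> lp_iso V W -> lp_iso U W.
Proof.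
case=> f [[g fg gf] hl hle]; case=> f' [[g' fg' gf'] hl' hle'].
apply: (@iso_mk _ _ (f' \o f) (g \o g')) => /=.
- by move=> x /=; rewrite fg' fg.
- by move=> x /=; rewrite gf gf'.
- by move=> x; rewrite hl' hl.
- by move=> x y; rewrite hle' hle.
Qed.

Lemma iso_seq U U' V V' : lp_iso U U' -> lp_iso V V' ->
  lp_iso (pom_seq U V) (pom_seq U' V').
Proof.
case=> f [[g fg gf] hl hle]; case=> f' [[g' fg' gf'] hl' hle'].
pose F (x : lp_car (pom_seq U V)) : lp_car (pom_seq U' V') :=
  match x with inl u => inl (f u) | inr v => inr (f' v) end.
pose G (x : lp_car (pom_seq U' V')) : lp_car (pom_seq U V) :=
  match x with inl u => inl (g u) | inr v => inr (g' v) end.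
apply: (@iso_mk _ _ F G).
- by case=> x /=; rewrite ?fg ?fg'.
- by case=> x /=; rewrite ?gf ?gf'.
- by case=> x /=.
- by case=> x [] y /=.
Qed.

Lemma iso_assoc U V W :
  lp_iso (pom_seq (pom_seq U V) W) (pom_seq U (pom_seq V W)).
Proof.
pose F (x : lp_car (pom_seq (pom_seq U V) W)) : lp_car (pom_seq U (pom_seq V W)) :=
  match x with inl (inl u) => inl u | inl (inr v) => inr (inl v)
  | inr w => inr (inr w) end.
pose G (x : lp_car (pom_seq U (pom_seq V W))) : lp_car (pom_seq (pom_seq U V) W) :=
  match x with inl u => inl (inl u) | inr (inl v) => inl (inr v)
  | inr (inr w) => inr w end.
apply: (@iso_mk _ _ F G).
- by case=> [[]|] x.
- by case=> [|[]] x.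
- by case=> [[]|] x.
- by case=> [[]|] x [[]|] y.
Qed.

Lemma iso_unitl U : lp_iso (pom_seq (pom_one Sigma) U) U.
Proof.
pose F (x : lp_car (pom_seq (pom_one Sigma) U)) : lp_car U :=
  match x with inl v => of_void _ v | inr u => u end.
pose G (x : lp_car U) : lp_car (pom_seq (pom_one Sigma) U) := inr x.
apply: (@iso_mk _ _ F G).
- by case=> [[]|] x.
- by [].
- by case=> [[]|] x.
- by case=> [[]|] x [[]|] y.
Qed.

Lemma iso_unitr U : lp_iso U (pom_seq U (pom_one Sigma)).
Proof.
pose G (x : lp_car (pom_seq U (pom_one Sigma))) : lp_car U :=
  match x with inr v => of_void _ v | inl u => u end.
pose F (x : lp_car U) : lp_car (pom_seq U (pom_one Sigma)) := inl x.
apply: (@iso_mk _ _ F G).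
- by [].
- by case=> [|[]] x.
- by [].
- by [].
Qed.

Lemma iso_prod_cat (s1 s2 : seq (lposet Sigma)) :
  lp_iso (pom_prod (s1 ++ s2)) (pom_seq (pom_prod s1) (pom_prod s2)).
Proof.
elim: s1 => [|x s1 IH]; first exact/iso_sym/iso_unitl.
change (lp_iso (pom_seq x (pom_prod (s1 ++ s2)))
  (pom_seq (pom_seq x (pom_prod s1)) (pom_prod s2))).
apply: (iso_trans (iso_seq (iso_refl x) IH)).
exact/iso_sym/iso_assoc.
Qed.

End Isos.

Theorem mainTheorem8 (Sigma : finType) (A : PA Sigma) (q q' : pa_Q A)
    (U : lposet Sigma) :
  trace q U q' ->
  exists (l : nat) (qs : nat -> pa_Q A) (Us : nat -> lposet Sigma),
    [/\ qs 0 = q, qs l = q',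
        lp_iso U (pom_prod [seq Us i | i <- iota 0 l]) &
        forall i, i < l -> unit_trace (qs i) (Us i) (qs i.+1)].
Proof.
elim=> {q U q'}.
- move=> q; exists 0, (fun _ => q), (fun _ => pom_one Sigma); split => //.
  exact: iso_refl.
- move=> q a; exists 1, (fun i => if i is 0 then q else pa_delta A q a),
    (fun _ => pom_sym a); split => //=.
  + exact: iso_unitr.
  + case=> // _; left; exists a; split => //; exact: iso_refl.
- move=> q q'' q' U V _ [l1 [qs1 [Us1 [h10 h1l h1i h1u]]]]
    _ [l2 [qs2 [Us2 [h20 h2l h2i h2u]]]].
  exists (l1 + l2), (fun i => if i < l1 then qs1 i else qs2 (i - l1)),
    (fun i => if i < l1 then Us1 i else Us2 (i - l1)); split.
  + case: ifP => // /negbT; rewrite lt0n negbK => /eqP l10.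
    by rewrite h20 -h1l l10.
  + by rewrite ltnNge leq_addr /= addKn.
  + rewrite iotaD map_cat add0n.
    apply: iso_trans (iso_seq h1i h2i) _; apply: iso_sym.
    have -> : [seq (if i < l1 then Us1 i else Us2 (i - l1)) | i <- iota 0 l1]
      = [seq Us1 i | i <- iota 0 l1].
      by apply/eq_in_map => i; rewrite mem_iota add0n => /andP [_ ->].
    have -> : [seq (if i < l1 then Us1 i else Us2 (i - l1)) | i <- iota l1 l2]
      = [seq Us2 i | i <- iota 0 l2].
      have -> : iota l1 l2 = map (addn l1) (iota 0 l2) by rewrite -iotaDl addn0.
      rewrite -map_comp; apply: eq_map => i /=.
      by rewrite ltnNge leq_addr /= addKn.
    exact: iso_prod_cat.
  + move=> i hi; case: (ltnP i l1) => hil.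
    * case: ltnP => hil1.
      - exact: h1u.
      - have e : i.+1 = l1 by apply/eqP; rewrite eqn_leq hil hil1.
        by rewrite e subnn h20 -h1l -e; apply: h1u; rewrite e.
    * rewrite ltnNge (leq_trans hil (leqnSn _)) /= subSn //.
      apply: h2u; by rewrite ltn_subLR.
- move=> q r r' s s' U V hU _ hr hV _ hs.
  exists 1, (fun i => if i is 0 then q else pa_gamma A q r s),
    (fun _ => pom_par U V); split => //=.
  + exact: iso_unitr.
  + case=> // _; right; exists r, s, r', s', U, V; split => //.
    exact: iso_refl.
- move=> q q' U V hUV _ [l [qs [Us [h0 hl hi hu]]]].
  exists l, qs, Us; split => //; exact: iso_trans (iso_sym hUV) hi.
Qed.
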